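(* Let $p\ge2$ be an integer and $\eta>-1$. (1) If $\eta\ge -\frac{p-1}{p}$, then $\tau_\ell(s)\le\pi$ for every $s\in[-1,1]$. (2) If $-1<\eta<-\frac{p-1}{p}$, then $\tau_\ell(s)\ge\pi$ for all $s$ with $\frac{p-1}{p|\eta|}\le|s|\le 1$, and $\tau_\ell(s)<\pi$ for all $s$ with $|s|<\frac{p-1}{p|\eta|}$.
   Context: For an integer $p\ge 2$ and a real parameter $\eta>-1$, define for $\tau\ge 0$ and $s\in[-1,1]$ $$\ell_-(\tau,s)=\cos\tau\,\sin\!\Big(\tau\eta s-\tfrac{\pi}{p}\Big)+s\sin\tau\,\cos\!\Big(\tau\eta s-\tfrac{\pi}{p}\Big),\qquad \ell_+(\tau,s)=\cos\tau\,\sin\!\Big(\tau\eta s+\tfrac{\pi}{p}\Big)+s\sin\tau\,\cos\!\Big(\tau\eta s+\tfrac{\pi}{p}\Big).$$ Let $\tau_\ell^-(s)$ (resp. $\tau_\ell^+(s)$) be the smallest positive root in $\tau$ of $\ell_-(\tau,s)=0$ (resp. $\ell_+(\tau,s)=0$), and $\tau_\ell(s)=\min(\tau_\ell^-(s),\tau_\ell^+(s))$. *)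

(* Defs.v *)
From Stdlib Require Import Reals.
From Coquelicot Require Import Coquelicot.
Open Scope R_scope.

Definition ell_minus (p : nat) (eta tau s : R) : R :=
  cos tau * sin (tau * eta * s - PI / INR p)
  + s * sin tau * cos (tau * eta * s - PI / INR p).

Definition ell_plus (p : nat) (eta tau s : R) : R :=
  cos tau * sin (tau * eta * s + PI / INR p)
  + s * sin tau * cos (tau * eta * s + PI / INR p).

(* Smallest positive root of f, as the infimum (in the extended reals) of the
   set of positive roots; it is p_infty when there is no positive root.
   Since the root set is closed and f(0) <> 0 here, the infimum is attained,
   i.e. it is the smallest positive root whenever one exists. *)
Definition first_pos_root (f : R -> R) : Rbar :=
  Glb_Rbar (fun t => 0 < t /\ f t = 0).

Definition tau_l_minus (p : nat) (eta s : R) : Rbar :=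
  first_pos_root (fun t => ell_minus p eta t s).
Definition tau_l_plus (p : nat) (eta s : R) : Rbar :=
  first_pos_root (fun t => ell_plus p eta t s).
Definition tau_l (p : nat) (eta s : R) : Rbar :=
  Rbar_min (tau_l_minus p eta s) (tau_l_plus p eta s).

(* Main.v *)
Require Import Defs.
From Stdlib Require Import Reals Lra Psatz.
From Coquelicot Require Import Coquelicot.
Open Scope R_scope.

Definition hh (a c s t : R) : R := a * t + c - atan (cos t / (s * sin t)).
Definition dh (a s t : R) : R := a + s / (s^2 * sin t ^ 2 + cos t ^ 2).

Lemma hh_derive a c s t : 0 < s -> sin t <> 0 -> is_derive (hh a c s) t (dh a s t).
Proof.
  intros Hs Hsin. unfold hh, dh.
  assert (HD: 0 < s^2 * sin t ^ 2 + cos t ^ 2).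
  { assert (0 < sin t * sin t) by (apply Rsqr_pos_lt; auto).
    assert (0 <= cos t * cos t) by apply Rle_0_sqr. assert (0 < s*s) by nra.
    assert (0 < (s*s)*(sin t*sin t)) by (apply Rmult_lt_0_compat; auto). simpl. nra. }
  auto_derive.
  - intro H. apply Hsin. nra.
  - set (Sn := sin t) in *. set (Cn := cos t) in *.
    assert (Hq : 1 + Cn * / (s * Sn) * (Cn * / (s * Sn) * 1) = (s^2 * Sn^2 + Cn^2) / (s*Sn)^2) by (field; lra).
    assert (Hsc : Sn ^ 2 + Cn ^ 2 = 1) by (unfold Sn, Cn; rewrite <- (sin2_cos2 t); unfold Rsqr; ring).
    rewrite Hq. field_simplify_eq.
    + assert (HC : Cn ^ 2 = 1 - Sn ^ 2) by lra. rewrite HC. ring.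
    + split; [|split; lra]. replace ((s * Sn) ^ 2) with (s^2 * Sn^2) by ring. lra.
Qed.

Lemma sin_pos_open t : 0 < t < PI -> 0 < sin t.
Proof. intros [H1 H2]. apply sin_gt_0; auto. Qed.

Lemma dh_pos a s t : 0 < s <= 1 -> 0 < a + s -> 0 < dh a s t.
Proof.
  intros [Hs Hs1] Has. unfold dh.
  assert (Hsc : sin t ^ 2 + cos t ^ 2 = 1) by (rewrite <- (sin2_cos2 t); unfold Rsqr; ring).
  set (D := s ^ 2 * sin t ^ 2 + cos t ^ 2).
  assert (HD1 : D <= 1).
  { unfold D. assert (0 <= sin t ^ 2) by (simpl; nra). assert (s^2 <= 1) by (simpl; nra). nra. }
  assert (HD0 : s ^ 2 <= D).
  { unfold D. assert (0 <= cos t ^ 2) by (simpl; nra). assert (s^2 <= 1) by (simpl; nra). nra. }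
  assert (0 < s^2) by (simpl; nra).
  assert (s <= s / D).
  { apply (Rmult_le_reg_r D); [lra|]. unfold Rdiv. rewrite Rmult_assoc, Rinv_l by lra. nra. }
  lra.
Qed.

Lemma hh_cont a c s t : 0 < s -> 0 < t < PI -> continuity_pt (hh a c s) t.
Proof.
  intros Hs Ht. apply continuity_pt_filterlim. apply (@ex_derive_continuous R_AbsRing R_NormedModule).
  eexists. apply hh_derive; auto. apply Rgt_not_eq, sin_pos_open; auto.
Qed.

Lemma hh_incr a c s x y : 0 < s <= 1 -> 0 < a + s -> 0 < x -> x < y -> y < PI ->
  hh a c s x < hh a c s y.
Proof.
  intros Hs Has Hx Hxy Hy.
  destruct (MVT_gen (hh a c s) x y (dh a s)) as [z [Hz Heq]].
  - rewrite Rmin_left, Rmax_right by lra. intros z Hz. apply hh_derive; [lra|].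
    apply Rgt_not_eq, sin_pos_open; lra.
  - rewrite Rmin_left, Rmax_right by lra. intros z Hz. apply hh_cont; lra.
  - assert (0 < dh a s z) by (apply dh_pos; auto). nra.
Qed.

Lemma hh_le a c s x y : 0 < s <= 1 -> 0 < a + s -> 0 < x -> x <= y -> y < PI ->
  hh a c s x <= hh a c s y.
Proof.
  intros. destruct (Req_dec x y) as [->|]; [lra|]. left. apply hh_incr; auto. lra.
Qed.

Lemma hh_lower_w a c s t : 0 < s <= 1 -> 0 < a + s -> 0 < t < PI ->
  c - PI/2 <= hh a c s t.
Proof.
  intros Hs Has Ht.
  destruct (Rlt_or_le (hh a c s t) (c - PI/2)) as [H|H]; [|lra].
  exfalso.
  set (d := c - PI/2 - hh a c s t).
  assert (Hd : 0 < d) by (unfold d; lra).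
  set (m := Rabs a).
  assert (Hm0 : 0 <= m) by apply Rabs_pos.
  assert (Hma : - m <= a) by (unfold m; rewrite <- Rabs_Ropp; pose proof (Rle_abs (-a)); lra).
  set (u := Rmin t (d / (2*m+1))).
  assert (Hu1 : u <= t) by apply Rmin_l.
  assert (Hu2 : u <= d/(2*m+1)) by apply Rmin_r.
  assert (Hu0 : 0 < u).
  { unfold u. apply Rmin_glb_lt; [lra|]. apply Rdiv_lt_0_compat; lra. }
  assert (Hu3 : u * (2*m+1) <= d).
  { apply (Rmult_le_compat_r (2*m+1)) in Hu2; [|lra].
    unfold Rdiv in Hu2. rewrite Rmult_assoc, Rinv_l in Hu2 by lra. lra. }
  assert (Hh1 : hh a c s u <= hh a c s t) by (apply hh_le; auto; lra).
  assert (Hh2 : a * u + c - PI/2 < hh a c s u).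
  { unfold hh. pose proof (atan_bound (cos u / (s * sin u))). lra. }
  assert (- m * u <= a * u) by nra.
  assert (0 <= m * u) by nra.
  unfold d in Hu3. nra.
Qed.

Lemma hh_lower a c s t : 0 < s <= 1 -> 0 < a + s -> 0 < t < PI ->
  c - PI/2 < hh a c s t.
Proof.
  intros Hs Has Ht.
  assert (Hlt : hh a c s (t/2) < hh a c s t) by (apply hh_incr; auto; lra).
  pose proof (hh_lower_w a c s (t/2) Hs Has ltac:(lra)). lra.
Qed.

Lemma hh_upper_w a c s t : 0 < s <= 1 -> 0 < a + s -> 0 < t < PI ->
  hh a c s t <= a * PI + c + PI/2.
Proof.
  intros Hs Has Ht.
  destruct (Rlt_or_le (a * PI + c + PI/2) (hh a c s t)) as [H|H]; [|lra].
  exfalso.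
  set (d := hh a c s t - (a * PI + c + PI/2)).
  assert (Hd : 0 < d) by (unfold d; lra).
  set (m := Rabs a).
  assert (Hm0 : 0 <= m) by apply Rabs_pos.
  assert (Hma : a <= m) by (unfold m; apply Rle_abs).
  assert (Hma' : - m <= a) by (unfold m; rewrite <- Rabs_Ropp; pose proof (Rle_abs (-a)); lra).
  set (w := Rmin (PI - t) (d / (2*m+1))).
  assert (Hw1 : w <= PI - t) by apply Rmin_l.
  assert (Hw2 : w <= d/(2*m+1)) by apply Rmin_r.
  assert (Hw0 : 0 < w).
  { unfold w. apply Rmin_glb_lt; [lra|]. apply Rdiv_lt_0_compat; lra. }
  assert (Hw3 : w * (2*m+1) <= d).
  { apply (Rmult_le_compat_r (2*m+1)) in Hw2; [|lra].
    unfold Rdiv in Hw2. rewrite Rmult_assoc, Rinv_l in Hw2 by lra. lra. }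
  set (u := PI - w).
  assert (Hh1 : hh a c s t <= hh a c s u) by (apply hh_le; auto; unfold u; lra).
  assert (Hh2 : hh a c s u < a * u + c + PI/2).
  { unfold hh. pose proof (atan_bound (cos u / (s * sin u))). lra. }
  assert (a * w <= m * w) by nra.
  assert (0 <= m * w) by nra.
  unfold u, d in *. nra.
Qed.

Lemma hh_upper a c s t : 0 < s <= 1 -> 0 < a + s -> 0 < t < PI ->
  hh a c s t < a * PI + c + PI/2.
Proof.
  intros Hs Has Ht.
  assert (Hlt : hh a c s t < hh a c s ((t + PI)/2)) by (apply hh_incr; auto; lra).
  pose proof (hh_upper_w a c s ((t+PI)/2) Hs Has ltac:(lra)). lra.
Qed.

Lemma ell_hh a c s t : 0 < s -> 0 < t < PI ->
  cos t * sin (a * t + c) + s * sin t * cos (a * t + c)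
  = s * sin t * sqrt (1 + (cos t / (s * sin t))²) * cos (hh a c s t).
Proof.
  intros Hs Ht. pose proof (sin_pos_open t Ht).
  unfold hh. replace (a * t + c - atan (cos t / (s * sin t))) with ((a*t+c) - atan (cos t / (s * sin t))) by ring.
  rewrite cos_minus, cos_atan, sin_atan.
  assert (0 < sqrt (1 + (cos t / (s * sin t))²)).
  { apply sqrt_lt_R0. pose proof (Rle_0_sqr (cos t / (s * sin t))). lra. }
  field. split; lra.
Qed.

Lemma INR_ge2 p : (2 <= p)%nat -> 2 <= INR p.
Proof. intros H. apply le_INR in H. simpl in H. lra. Qed.

Lemma P_bounds p : (2 <= p)%nat -> 0 < PI / INR p <= PI / 2.
Proof.
  intros H. pose proof (INR_ge2 p H). pose proof PI_RGT_0. split.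
  - apply Rdiv_lt_0_compat; lra.
  - unfold Rdiv. apply Rmult_le_compat_l; [lra|]. apply Rinv_le_contravar; lra.
Qed.

Lemma aPI_bound p a : (2 <= p)%nat -> a <= - (INR p - 1) / INR p -> a * PI <= - PI + PI / INR p.
Proof.
  intros H Ha. pose proof (INR_ge2 p H). pose proof PI_RGT_0.
  apply (Rmult_le_compat_r PI) in Ha; [|lra].
  replace (- PI + PI / INR p) with (- (INR p - 1) / INR p * PI) by (field; lra). exact Ha.
Qed.

Lemma no_root p eta s t : (2 <= p)%nat -> -1 < eta -> 0 < s <= 1 ->
  eta * s <= - (INR p - 1) / INR p -> 0 < t < PI ->
  ell_minus p eta t s < 0 /\ 0 < ell_plus p eta t s.
Proof.
  intros Hp Heta Hs Ha Ht.
  pose proof (P_bounds p Hp) as HP. pose proof (aPI_bound p _ Hp Ha) as HaP.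
  pose proof PI_RGT_0.
  set (P := PI / INR p) in *. set (a := eta * s) in *.
  assert (Has : 0 < a + s) by (unfold a; nra).
  assert (HK : 0 < s * sin t * sqrt (1 + (cos t / (s * sin t))²)).
  { pose proof (sin_pos_open t Ht). apply Rmult_lt_0_compat; [nra|].
    apply sqrt_lt_R0. pose proof (Rle_0_sqr (cos t / (s * sin t))). lra. }
  unfold ell_minus, ell_plus. fold P.
  replace (t * eta * s - P) with (a * t + - P) by (unfold a; ring).
  replace (t * eta * s + P) with (a * t + P) by (unfold a; ring).
  rewrite !ell_hh by lra.
  split.
  - pose proof (hh_lower a (-P) s t ltac:(lra) Has Ht).
    pose proof (hh_upper a (-P) s t ltac:(lra) Has Ht).
    assert (cos (hh a (- P) s t) < 0).
    { rewrite <- cos_neg. apply cos_lt_0; lra. }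
    nra.
  - pose proof (hh_lower a P s t ltac:(lra) Has Ht).
    pose proof (hh_upper a P s t ltac:(lra) Has Ht).
    assert (0 < cos (hh a P s t)) by (apply cos_gt_0; lra).
    nra.
Qed.

Lemma ell_minus_cont p eta s : continuity (fun t => ell_minus p eta t s).
Proof.
  intros x. apply continuity_pt_filterlim.
  change (continuous (fun t => ell_minus p eta t s) x).
  apply (@ex_derive_continuous R_AbsRing R_NormedModule).
  unfold ell_minus. auto_derive. auto.
Qed.

Lemma ivt0 (f : R -> R) y : continuity f -> 0 < y -> f 0 < 0 -> 0 < f y ->
  exists z, 0 < z < y /\ f z = 0.
Proof.
  intros Hc Hy H0 H1. destruct (IVT f 0 y Hc Hy H0 H1) as [z [Hz Hfz]].
  exists z. split; [|auto]. split.
  - destruct (Req_dec z 0) as [->|]; [lra|lra].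
  - destruct (Req_dec z y) as [->|]; [lra|lra].
Qed.

Lemma root_exists p eta s : (2 <= p)%nat -> 0 < s ->
  - (INR p - 1) / INR p <= eta * s ->
  exists t, 0 < t <= PI /\ ell_minus p eta t s = 0 /\
    (- (INR p - 1) / INR p < eta * s -> t < PI).
Proof.
  intros Hp Hs Ha.
  pose proof (P_bounds p Hp) as HP. pose proof (INR_ge2 p Hp) as Hn.
  pose proof PI_RGT_0.
  assert (HaP : - PI + PI / INR p <= eta * s * PI).
  { apply (Rmult_le_compat_r PI) in Ha; [|lra].
    replace (- PI + PI / INR p) with (- (INR p - 1) / INR p * PI) by (field; lra). exact Ha. }
  assert (HaPs : - (INR p - 1) / INR p < eta * s -> - PI + PI / INR p < eta * s * PI).
  { intros Ha'. apply (Rmult_lt_compat_r PI) in Ha'; [|lra].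
    replace (- PI + PI / INR p) with (- (INR p - 1) / INR p * PI) by (field; lra). exact Ha'. }
  set (P := PI / INR p) in *. set (a := eta * s) in *.
  assert (Hf : forall t, ell_minus p eta t s = cos t * sin (a * t - P) + s * sin t * cos (a * t - P)).
  { intros t. unfold ell_minus. fold P. replace (t * eta * s) with (a * t) by (unfold a; ring). auto. }
  assert (H0 : ell_minus p eta 0 s < 0).
  { rewrite Hf, cos_0, sin_0. replace (a * 0 - P) with (- P) by ring. rewrite sin_neg.
    pose proof (sin_gt_0 P ltac:(lra) ltac:(lra)). lra. }
  destruct (Rle_or_lt a 0) as [Ha0|Ha0].
  -
    assert (HfPI : ell_minus p eta PI s = - sin (a * PI - P)).
    { rewrite Hf, cos_PI, sin_PI. ring. }
    destruct (Req_dec (a * PI - P) (- PI)) as [He|He].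
    + exists PI. split; [lra|]. split.
      * rewrite HfPI, He, sin_neg, sin_PI. ring.
      * intros Hlt. apply HaPs in Hlt. lra.
    + assert (0 < ell_minus p eta PI s).
      { rewrite HfPI. rewrite <- (Ropp_involutive (a * PI - P)), sin_neg.
        assert (0 < sin (- (a * PI - P))) by (assert (a * PI <= 0) by nra; assert (a * PI - P <> - PI) by exact He; apply sin_gt_0; [lra|]; destruct (Rle_lt_or_eq_dec _ _ HaP); [lra|]; exfalso; apply He; lra). lra. }
      destruct (ivt0 _ PI (ell_minus_cont p eta s) ltac:(lra) H0 H1) as [z [Hz Hfz]].
      exists z. split; [lra|]. split; [auto|]. intros; lra.
  - destruct (Rle_or_lt a 1) as [Ha1|Ha1].
    + assert (0 < ell_minus p eta (PI/2) s).
      { rewrite Hf, cos_PI2, sin_PI2.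
        assert (0 < cos (a * (PI/2) - P)) by (apply cos_gt_0; nra). nra. }
      destruct (ivt0 _ (PI/2) (ell_minus_cont p eta s) ltac:(lra) H0 H1) as [z [Hz Hfz]].
      exists z. split; [lra|]. split; [auto|]. intros; lra.
    + set (y := P / a).
      assert (Hy0 : 0 < y) by (unfold y; apply Rdiv_lt_0_compat; lra).
      assert (Hy1 : y < P).
      { unfold y. apply (Rmult_lt_reg_r a); [lra|]. unfold Rdiv. rewrite Rmult_assoc, Rinv_l by lra. nra. }
      assert (0 < ell_minus p eta y s).
      { rewrite Hf. replace (a * y - P) with 0 by (unfold y; field; lra).
        rewrite sin_0, cos_0. assert (0 < sin y) by (apply sin_gt_0; lra). nra. }
      destruct (ivt0 _ y (ell_minus_cont p eta s) Hy0 H0 H1) as [z [Hz Hfz]].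
      exists z. split; [lra|]. split; [auto|]. intros; lra.
Qed.

From Stdlib Require Import FunctionalExtensionality PropExtensionality.

Lemma ell_minus_neg p eta t s : ell_minus p eta t (- s) = - ell_plus p eta t s.
Proof.
  unfold ell_minus, ell_plus.
  replace (t * eta * - s - PI / INR p) with (- (t * eta * s + PI / INR p)) by ring.
  rewrite sin_neg, cos_neg. ring.
Qed.

Lemma ell_plus_neg p eta t s : ell_plus p eta t (- s) = - ell_minus p eta t s.
Proof.
  unfold ell_minus, ell_plus.
  replace (t * eta * - s + PI / INR p) with (- (t * eta * s - PI / INR p)) by ring.
  rewrite sin_neg, cos_neg. ring.
Qed.

Lemma tau_l_neg p eta s : tau_l p eta (- s) = tau_l p eta s.
Proof.
  unfold tau_l, tau_l_minus, tau_l_plus, first_pos_root.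
  assert (E1 : (fun t => 0 < t /\ ell_minus p eta t (- s) = 0) = (fun t => 0 < t /\ ell_plus p eta t s = 0)).
  { apply functional_extensionality; intro t. apply propositional_extensionality.
    rewrite ell_minus_neg. split; intros [H1 H2]; split; auto; lra. }
  assert (E2 : (fun t => 0 < t /\ ell_plus p eta t (- s) = 0) = (fun t => 0 < t /\ ell_minus p eta t s = 0)).
  { apply functional_extensionality; intro t. apply propositional_extensionality.
    rewrite ell_plus_neg. split; intros [H1 H2]; split; auto; lra. }
  rewrite E1, E2. apply Rbar_min_comm.
Qed.

Lemma tau_le_root p eta s t : 0 < t -> ell_minus p eta t s = 0 -> Rbar_le (tau_l p eta s) t.
Proof.
  intros Ht Hr. eapply Rbar_le_trans; [apply Rbar_min_l|].
  unfold tau_l_minus, first_pos_root. destruct (Glb_Rbar_correct (fun t => 0 < t /\ ell_minus p eta t s = 0)) as [Hlb _].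
  apply Hlb. auto.
Qed.

Lemma tau_ge p eta s : (forall t, 0 < t < PI -> ell_minus p eta t s <> 0 /\ ell_plus p eta t s <> 0) ->
  Rbar_le PI (tau_l p eta s).
Proof.
  intros H. unfold tau_l. apply Rbar_min_case.
  - unfold tau_l_minus, first_pos_root. destruct (Glb_Rbar_correct (fun t => 0 < t /\ ell_minus p eta t s = 0)) as [_ Hg].
    apply Hg. intros x [Hx Hr]. simpl. destruct (Rlt_or_le x PI) as [Hl|Hl]; [|auto].
    exfalso. apply (proj1 (H x (conj Hx Hl))). auto.
  - unfold tau_l_plus, first_pos_root. destruct (Glb_Rbar_correct (fun t => 0 < t /\ ell_plus p eta t s = 0)) as [_ Hg].
    apply Hg. intros x [Hx Hr]. simpl. destruct (Rlt_or_le x PI) as [Hl|Hl]; [|auto].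
    exfalso. apply (proj2 (H x (conj Hx Hl))). auto.
Qed.

Lemma tau_pos_case p eta s : (2 <= p)%nat -> 0 < s -> - (INR p - 1) / INR p <= eta * s ->
  Rbar_le (tau_l p eta s) PI /\ (- (INR p - 1) / INR p < eta * s -> Rbar_lt (tau_l p eta s) PI).
Proof.
  intros Hp Hs Ha. destruct (root_exists p eta s Hp Hs Ha) as [t [Ht [Hr Hlt]]].
  pose proof (tau_le_root p eta s t ltac:(lra) Hr) as Hle. split.
  - eapply Rbar_le_trans; [exact Hle|]. simpl. lra.
  - intros H. eapply Rbar_le_lt_trans; [exact Hle|]. simpl. auto.
Qed.

Lemma tau_zero p eta : Rbar_lt (tau_l p eta 0) PI.
Proof.
  eapply Rbar_le_lt_trans; [apply (tau_le_root p eta 0 (PI/2))|].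
  - pose proof PI_RGT_0; lra.
  - unfold ell_minus. rewrite cos_PI2. ring.
  - simpl. pose proof PI_RGT_0; lra.
Qed.

Theorem mainTheorem3 (p : nat) (eta : R) :
  (2 <= p)%nat -> -1 < eta ->
  (eta >= - (INR p - 1) / INR p ->
     forall s, -1 <= s <= 1 -> Rbar_le (tau_l p eta s) (Finite PI))
  /\
  (eta < - (INR p - 1) / INR p ->
     (forall s, (INR p - 1) / (INR p * Rabs eta) <= Rabs s <= 1 ->
        Rbar_le (Finite PI) (tau_l p eta s))
     /\
     (forall s, Rabs s < (INR p - 1) / (INR p * Rabs eta) ->
        Rbar_lt (tau_l p eta s) (Finite PI))).
Proof.
  intros Hp Heta. pose proof (INR_ge2 p Hp) as Hn.
  assert (Hq : - (INR p - 1) / INR p = - ((INR p - 1) / INR p)) by (field; lra).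
  assert (Hq0 : 0 < (INR p - 1) / INR p) by (apply Rdiv_lt_0_compat; lra).
  rewrite Hq. set (q := (INR p - 1) / INR p) in *.
  split.
  - intros Hge s Hs.
    destruct (Rtotal_order s 0) as [Hneg|[H0|Hpos]].
    + rewrite <- (Ropp_involutive s), tau_l_neg.
      apply (tau_pos_case p eta (- s) Hp ltac:(lra)). rewrite Hq.
      destruct (Rle_or_lt 0 eta); nra.
    + subst. apply Rbar_lt_le, tau_zero.
    + apply (tau_pos_case p eta s Hp Hpos). rewrite Hq.
      destruct (Rle_or_lt 0 eta); nra.
  - intros Hlt. assert (Heta0 : eta < 0) by lra.
    rewrite (Rabs_left eta Heta0).
    assert (Hth : (INR p - 1) / (INR p * - eta) * (- eta) = q) by (unfold q; field; lra).
    set (th := (INR p - 1) / (INR p * - eta)) in *.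
    split.
    + intros s [Hs1 Hs2].
      assert (Hth0 : 0 < th) by nra.
      assert (Hu : eta * Rabs s <= - q) by nra.
      destruct (Rtotal_order s 0) as [Hneg|[H0|Hpos]].
      * rewrite Rabs_left in Hu, Hs2 by lra.
        rewrite <- (Ropp_involutive s), tau_l_neg.
        apply tau_ge. intros t Ht.
        destruct (no_root p eta (- s) t Hp Heta ltac:(lra) ltac:(rewrite Hq; lra) Ht). lra.
      * subst. rewrite Rabs_R0 in Hs1. lra.
      * rewrite Rabs_right in Hu, Hs2 by lra.
        apply tau_ge. intros t Ht.
        destruct (no_root p eta s t Hp Heta ltac:(lra) ltac:(rewrite Hq; lra) Ht). lra.
    + intros s Hs.
      assert (Hu : - q < eta * Rabs s) by (pose proof (Rabs_pos s); nra).
      destruct (Rtotal_order s 0) as [Hneg|[H0|Hpos]].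
      * rewrite Rabs_left in Hu by lra.
        rewrite <- (Ropp_involutive s), tau_l_neg.
        apply (tau_pos_case p eta (- s) Hp ltac:(lra)); rewrite Hq; lra.
      * subst. apply tau_zero.
      * rewrite Rabs_right in Hu by lra.
        apply (tau_pos_case p eta s Hp Hpos); rewrite Hq; lra.
Qed.
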